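(* For every integer $b\geq 1$, $$\sum_{n\geq 1}\frac{H_n}{(2n+1)^{4b-1}}=-2\lambda(4b-1)\ln 2+\Big(2b-\frac12\Big)\lambda(4b)-2\sum_{q=1}^{b-1}\lambda(2q+1)\lambda(4b-2q-1),$$ where an empty sum equals $0$.
   Context: $H_n=1+\frac12+\cdots+\frac1n$ is the $n$-th harmonic number. For real $s>1$, $\lambda(s)=\sum_{n\geq 1}\frac{1}{(2n-1)^s}=(1-2^{-s})\zeta(s)$. *)

(* Defs.v *)
From Stdlib Require Import Reals.
From Coquelicot Require Import Coquelicot.
Open Scope R_scope.

Definition harmonic (n : nat) : R :=
  sum_n_m (fun k => / INR k) 1 n.

(* Dirichlet lambda at an integer argument s (> 1):
   lambda(s) = sum_{n >= 1} 1/(2n-1)^s = sum_{m >= 0} 1/(2m+1)^s. *)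
Definition dlambda (s : nat) : R :=
  Series (fun m : nat => / (INR (2 * m + 1)) ^ s).

(* Main.v *)
Require Import Defs.
From Stdlib Require Import Reals Lra Lia Arith.
From Coquelicot Require Import Coquelicot.
Open Scope R_scope.

Lemma ser_lim a (l:R) : is_lim_seq (sum_n a) l <-> is_series a l.
Proof. split; intro H; exact H. Qed.

Lemma serP a b la lb : is_series a la -> is_series b lb ->
  is_series (fun n => a n + b n) (la + lb).
Proof. intros. apply (is_series_plus a b la lb); auto. Qed.
Lemma serM a b la lb : is_series a la -> is_series b lb ->
  is_series (fun n => a n - b n) (la - lb).
Proof. intros. apply (is_series_minus a b la lb); auto. Qed.
Lemma serS c a la : is_series a la ->
  is_series (fun n => c * a n) (c * la).
Proof. intros. apply (is_series_scal c a la); auto. Qed.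
Lemma sumR (a : nat -> R) n : @eq R (sum_n a (S n)) (sum_n a n + a (S n)).
Proof. rewrite sum_Sn; reflexivity. Qed.
Lemma sum0 (a : nat -> R) : @eq R (sum_n a 0) (a 0%nat).
Proof. rewrite sum_O; reflexivity. Qed.

Lemma ser_ext (a b : nat -> R) (l l' : R) : (forall n, a n = b n) -> l = l' -> is_series a l -> is_series b l'.
Proof. intros H e H1; rewrite <- e; apply (is_series_ext a b l H H1). Qed.

Lemma ser_sum_n (f : nat -> nat -> R) (l : nat -> R) N :
  (forall k, is_series (fun i => f k i) (l k)) ->
  is_series (fun i => sum_n (fun k => f k i) N) (sum_n l N).
Proof.
  intros H. induction N.
  - apply (ser_ext (fun i => f 0%nat i) _ (l 0%nat)). intro n; symmetry; apply sum0.
    symmetry; apply sum0. apply H.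
  - apply (ser_ext (fun i => sum_n (fun k => f k i) N + f (S N) i) _ (sum_n l N + l (S N))).
    intro n; symmetry; apply sumR. symmetry; apply sumR.
    apply serP; auto.
Qed.

Lemma sum_n_const_after (a : nat -> R) N : (forall n, (N < n)%nat -> a n = 0) ->
  forall n, sum_n a (n + N) = sum_n a N.
Proof.
  intros H n; induction n. reflexivity.
  replace (S n + N)%nat with (S (n + N)) by lia. rewrite sumR, IHn, H by lia. lra.
Qed.

Lemma ser_fin (a : nat -> R) N : (forall n, (N < n)%nat -> a n = 0) ->
  is_series a (sum_n a N).
Proof.
  intros H. apply (proj1 (ser_lim _ _)). apply (proj2 (is_lim_seq_incr_n _ N _)).
  eapply is_lim_seq_ext. intro n; symmetry; apply sum_n_const_after; auto.
  apply is_lim_seq_const.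
Qed.

Lemma sum_nonneg (a : nat -> R) N : (forall n, 0 <= a n) -> 0 <= sum_n a N.
Proof. intros H; induction N. rewrite sum0; auto. rewrite sumR; specialize (H (S N)); lra. Qed.

Lemma sum_mono (a : nat -> R) N n : (forall n, 0 <= a n) -> sum_n a N <= sum_n a (n + N).
Proof. intros H; induction n. simpl; lra.
  replace (S n + N)%nat with (S (n + N)) by lia. rewrite sumR; specialize (H (S (n+N))); lra. Qed.

Lemma psum_le (a : nat -> R) l N : (forall n, 0 <= a n) -> is_series a l -> sum_n a N <= l.
Proof.
  intros H H1. apply (proj2 (ser_lim _ _)) in H1. apply (proj1 (is_lim_seq_incr_n _ N _)) in H1.
  pose proof (is_lim_seq_le (fun _ => sum_n a N) _ (sum_n a N) l (fun n => sum_mono a N n H)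
   (is_lim_seq_const _) H1). simpl in H0; auto.
Qed.

Lemma term_le (a : nat -> R) l k : (forall n, 0 <= a n) -> is_series a l -> a k <= l.
Proof.
  intros H H1. eapply Rle_trans. 2: apply (psum_le a l k H H1).
  destruct k. rewrite sum0; lra. rewrite sumR. pose proof (sum_nonneg a k H); lra.
Qed.

Lemma lim_le (a : nat -> R) l M : is_series a l -> (forall N, sum_n a N <= M) -> l <= M.
Proof.
  intros H1 H. apply (proj2 (ser_lim _ _)) in H1.
  pose proof (is_lim_seq_le _ (fun _ => M) l M H H1 (is_lim_seq_const _)). simpl in H0; auto.
Qed.

Lemma ser_bounded (a : nat -> R) M : (forall n, 0 <= a n) -> (forall N, sum_n a N <= M) -> ex_series a.
Proof.
  intros H H1. destruct (ex_finite_lim_seq_incr (sum_n a) M) as [l Hl].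
  intro n; rewrite sumR; specialize (H (S n)); lra. auto.
  exists l. apply (proj1 (ser_lim _ _)); auto.
Qed.

Lemma ser_le_sum (a b : nat -> R) la lb : (forall n, a n <= b n) -> is_series a la -> is_series b lb -> la <= lb.
Proof.
  intros H Ha Hb. apply (proj2 (ser_lim _ _)) in Ha; apply (proj2 (ser_lim _ _)) in Hb.
  pose proof (is_lim_seq_le _ _ la lb (fun n => sum_n_m_le a b 0 n H) Ha Hb). simpl in H0; auto.
Qed.

Lemma fub_le (g : nat -> nat -> R) (c r : nat -> R) (L : R) : (forall i j, 0 <= g i j) ->
  (forall j, is_series (fun i => g i j) (c j)) ->
  (forall i, is_series (fun j => g i j) (r i)) -> is_series r L ->
  forall N, sum_n c N <= L.
Proof.
  intros H0 Hc Hr HL N.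
  pose proof (ser_sum_n (fun j i => g i j) c N Hc) as H1. simpl in H1.
  eapply ser_le_sum. 2: exact H1. 2: exact HL.
  intro i. apply psum_le; auto.
Qed.

Lemma ser_nonneg (a : nat -> R) l : (forall n, 0 <= a n) -> is_series a l -> 0 <= l.
Proof. intros H H1. eapply Rle_trans. apply (H 0%nat). apply term_le; auto. Qed.

Lemma fubini (g : nat -> nat -> R) (c : nat -> R) (L : R) : (forall i j, 0 <= g i j) ->
  (forall j, is_series (fun i => g i j) (c j)) -> is_series c L ->
  exists r, (forall i, is_series (fun j => g i j) (r i)) /\ is_series r L.
Proof.
  intros H0 Hc HL.
  assert (Hr : forall i, is_series (fun j => g i j) (Series (fun j => g i j))).
  { intro i. apply Series_correct. apply (@ex_series_le R_AbsRing R_CompleteNormedModule _ c).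
    intro j. change (norm (g i j)) with (Rabs (g i j)). rewrite Rabs_pos_eq; auto.
    apply (term_le (fun i => g i j)); auto. exists L; auto. }
  set (r := fun i => Series (fun j => g i j)).
  assert (Hb : forall N, sum_n r N <= L).
  { apply (fub_le (fun a b => g b a) r c L); auto. }
  assert (rpos : forall i, 0 <= r i). { intro i. apply (ser_nonneg (fun j => g i j)); auto. }
  destruct (ser_bounded r L rpos Hb) as [L' HL'].
  exists r. split; auto.
  assert (L' <= L) by (apply (lim_le r); auto).
  assert (L <= L'). { apply (lim_le c L L'); auto. apply (fub_le g c r L'); auto. }
  replace L with L' by lra; auto.
Qed.

Definition X (a : nat) : R := INR (2 * a + 1).
Lemma X_eq a : X a = 2 * INR a + 1.
Proof. unfold X. rewrite plus_INR, mult_INR. simpl. ring. Qed.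
Lemma X_ge1 a : 1 <= X a.
Proof. rewrite X_eq. pose proof (pos_INR a). lra. Qed.
Lemma X_pos a : 0 < X a.
Proof. pose proof (X_ge1 a). lra. Qed.

Lemma pow_ge1 x k : 1 <= x -> 1 <= x ^ k.
Proof. intros H. induction k. simpl; lra. simpl. nra. Qed.

Lemma powinv_le x k k' : 1 <= x -> (k <= k')%nat -> / x ^ k' <= / x ^ k.
Proof.
  intros H Hk. apply Rinv_le_contravar. pose proof (pow_ge1 x k H); lra.
  apply Rle_pow; auto.
Qed.

Lemma sum_scal (c : R) (a : nat -> R) N : @eq R (sum_n (fun m => c * a m) N) (c * sum_n a N).
Proof. induction N. rewrite !sum0; auto. rewrite !sumR, IHN. ring. Qed.

Lemma tele_sum N : sum_n (fun m => / (INR m + 1) - / (INR m + 2)) N = 1 - / (INR N + 2).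
Proof.
  induction N.
  - rewrite sum0. simpl. lra.
  - rewrite sumR, IHN, S_INR. replace (INR N + 1 + 1) with (INR N + 2) by ring. lra.
Qed.

Lemma tele_ex : ex_series (fun m => 2 * (/ (INR m + 1) - / (INR m + 2))).
Proof.
  apply (ser_bounded _ 2).
  - intro n. pose proof (pos_INR n).
    assert (/ (INR n + 2) <= / (INR n + 1)) by (apply Rinv_le_contravar; lra). lra.
  - intro N. rewrite sum_scal. rewrite tele_sum. pose proof (pos_INR N). assert (0 < / (INR N + 2)) by (apply Rinv_0_lt_compat; lra). lra.
Qed.

Lemma inv2_le m : / X m ^ 2 <= 2 * (/ (INR m + 1) - / (INR m + 2)).
Proof.
  rewrite X_eq. pose proof (pos_INR m). set (t := INR m) in *.
  replace (2 * (/ (t + 1) - / (t + 2))) with (/ ((t+1)*(t+2)/2)) by (field; lra).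
  apply Rinv_le_contravar. nra. simpl. nra.
Qed.

Lemma lam_ex k : (2 <= k)%nat -> ex_series (fun m => / X m ^ k).
Proof.
  intros Hk. apply (@ex_series_le R_AbsRing R_CompleteNormedModule _ _ ) with (2:=tele_ex).
  intro n. change (norm (/ X n ^ k)) with (Rabs (/ X n ^ k)).
  rewrite Rabs_pos_eq. eapply Rle_trans. apply powinv_le. apply X_ge1. exact Hk. apply inv2_le.
  apply Rlt_le, Rinv_0_lt_compat, pow_lt, X_pos.
Qed.

Lemma lam_ser k : (2 <= k)%nat -> is_series (fun m => / X m ^ k) (dlambda k).
Proof. intros Hk. unfold dlambda. apply (Series_correct (fun m => / X m ^ k)). apply lam_ex; auto. Qed.

Lemma harm0 : harmonic 0 = 0.
Proof. unfold harmonic. rewrite sum_n_m_zero by lia. reflexivity. Qed.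

Lemma harmS n : harmonic (S n) = harmonic n + / INR (S n).
Proof. unfold harmonic. rewrite sum_n_Sm by lia. reflexivity. Qed.

Lemma harm_diff p d : 0 <= harmonic (p + d) - harmonic p <= INR d / (INR p + 1).
Proof.
  induction d.
  - rewrite Nat.add_0_r. simpl. pose proof (pos_INR p). unfold Rdiv. rewrite Rmult_0_l. lra.
  - replace (p + S d)%nat with (S (p + d)) by lia. rewrite harmS.
    rewrite S_INR, (S_INR d), plus_INR. pose proof (pos_INR p). pose proof (pos_INR d).
    assert (0 < / (INR p + INR d + 1)) by (apply Rinv_0_lt_compat; lra).
    assert (/ (INR p + INR d + 1) <= / (INR p + 1)) by (apply Rinv_le_contravar; lra).
    replace ((INR d + 1) / (INR p + 1)) with (INR d / (INR p + 1) + / (INR p + 1)) by (field; lra).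
    lra.
Qed.

Lemma harm_le n : harmonic n <= INR n.
Proof.
  induction n. rewrite harm0; simpl; lra.
  rewrite harmS, S_INR. assert (/ INR (S n) <= 1).
  { rewrite S_INR. pose proof (pos_INR n). replace 1 with (/ 1) by field. apply Rinv_le_contravar; lra. }
  rewrite S_INR in H. lra.
Qed.

Lemma harm_nonneg n : 0 <= harmonic n.
Proof. pose proof (harm_diff 0 n). simpl in H. rewrite harm0 in H. lra. Qed.

Lemma ln_le_sub1 y : 0 < y -> ln y <= y - 1.
Proof.
  intros H. pose proof (exp_ineq1_le (y - 1)).
  rewrite <- (ln_exp (y - 1)). apply ln_le; auto. lra.
Qed.

Lemma ln_step t : 1 <= t -> / (t + 1) <= ln (t + 1) - ln t <= / t.
Proof.
  intros H. split.
  - pose proof (ln_le_sub1 (t / (t + 1))). rewrite ln_div in H0 by lra.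
    assert (0 < t / (t + 1)) by (apply Rdiv_lt_0_compat; lra).
    replace (t / (t + 1) - 1) with (- / (t + 1)) in H0 by (field; lra). lra.
  - pose proof (ln_le_sub1 ((t + 1) / t)). rewrite ln_div in H0 by lra.
    assert (0 < (t + 1) / t) by (apply Rdiv_lt_0_compat; lra).
    replace ((t + 1) / t - 1) with (/ t) in H0 by (field; lra). lra.
Qed.

Lemma harm_ln N d : (1 <= N)%nat ->
  ln (INR (N + d) + 1) - ln (INR N + 1) <= harmonic (N + d) - harmonic N <= ln (INR (N + d)) - ln (INR N).
Proof.
  intros HN. assert (1 <= INR N) by (apply (le_INR 1); auto).
  induction d.
  - rewrite Nat.add_0_r. lra.
  - replace (N + S d)%nat with (S (N + d)) by lia. rewrite harmS. rewrite S_INR.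
    assert (1 <= INR (N + d)) by (apply (le_INR 1); lia).
    pose proof (ln_step (INR (N + d) + 1)) as [A B]. lra.
    pose proof (ln_step (INR (N + d))) as [C D]. lra.
    lra.
Qed.

Lemma ln2_le1 : ln 2 <= 1.
Proof. pose proof (ln_le_sub1 2). lra. Qed.
Lemma ln2_pos : 0 < ln 2.
Proof. rewrite <- ln_1. apply ln_increasing; lra. Qed.

Lemma harm_2N N : Rabs (harmonic (2 * N) - harmonic N - ln 2) <= 2 / (INR N + 1).
Proof.
  destruct N.
  - simpl. rewrite harm0. pose proof ln2_le1. pose proof ln2_pos.
    rewrite Rabs_left by lra. lra.
  - set (M := S N). assert (HM : (1 <= M)%nat) by (unfold M; lia).
    assert (HM' : 1 <= INR M) by (apply (le_INR 1); auto).
    replace (2 * M)%nat with (M + M)%nat by lia.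
    pose proof (harm_ln M M HM) as [A B].
    rewrite plus_INR in A, B.
    replace (INR M + INR M) with (2 * INR M) in * by ring.
    rewrite ln_mult in B by lra.
    assert (ln (2 * INR M) <= ln (2 * INR M + 1)) by (apply ln_le; lra).
    rewrite ln_mult in H by lra.
    pose proof (ln_step (INR M) HM') as [C D].
    assert (/ INR M <= 2 / (INR M + 1)).
    { replace (2 / (INR M + 1)) with (/ ((INR M + 1) / 2)) by (field; lra).
      apply Rinv_le_contravar; lra. }
    apply Rabs_le. lra.
Qed.

Lemma inv_lim : is_lim_seq (fun k => / (INR k + 1)) 0.
Proof.
  assert (H := is_lim_seq_INR). apply (proj1 (is_lim_seq_incr_n _ 1 _)) in H.
  apply is_lim_seq_inv in H. 2: discriminate.
  eapply is_lim_seq_ext. 2: exact H. intro n. simpl. rewrite plus_INR. reflexivity.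
Qed.

Lemma lim_by_bound (u : nat -> R) l K : (forall k, Rabs (u k - l) <= K / (INR k + 1)) -> is_lim_seq u l.
Proof.
  intros H.
  apply is_lim_seq_le_le with (u := fun k => l - K * / (INR k + 1)) (w := fun k => l + K * / (INR k + 1)).
  - intro k. specialize (H k). apply Rabs_le_between' in H. unfold Rdiv in H. lra.
  - replace (Finite l) with (Finite (l - K * 0)) by (f_equal; ring).
    apply is_lim_seq_minus'. apply is_lim_seq_const. apply (is_lim_seq_scal_l _ K 0 inv_lim).
  - replace (Finite l) with (Finite (l + K * 0)) by (f_equal; ring).
    apply is_lim_seq_plus'. apply is_lim_seq_const. apply (is_lim_seq_scal_l _ K 0 inv_lim).
Qed.

Definition Acore (x y : R) : R := / (x - y) + / (x + y) - 2 / x.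
Definition uu (c a : nat) : R := if Nat.eqb a c then 0 else Acore (X a) (X c).
Definition OO (N : nat) : R := sum_n (fun a => / X a) N.
Definition Gv (c : nat) : R := -2 * ln 2 - harmonic c + 3 / (2 * X c).

Lemma harm1 : harmonic 1 = 1.
Proof. rewrite harmS, harm0. simpl. field. Qed.

Lemma OO_eq N : OO N = harmonic (2 * N + 2) - / 2 * harmonic (N + 1).
Proof.
  unfold OO. induction N.
  - rewrite sum0. simpl. rewrite !harmS, harm0. unfold X. simpl. field.
  - rewrite sumR, IHN.
    replace (2 * S N + 2)%nat with (S (S (2 * N + 2))) by lia.
    replace (S N + 1)%nat with (S (N + 1)) by lia.
    rewrite !harmS. rewrite X_eq. rewrite !S_INR, !plus_INR, mult_INR, S_INR. simpl.
    pose proof (pos_INR N). field. lra.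
Qed.

Lemma Acore_val a c : Acore (X a) (X c) = / (2 * (INR a - INR c)) + / (2 * (INR a + INR c + 1)) - 2 / X a.
Proof. unfold Acore. rewrite !X_eq.
  replace (2*INR a+1 - (2*INR c+1)) with (2*(INR a - INR c)) by ring.
  replace (2*INR a + 1 + (2*INR c+1)) with (2*(INR a + INR c + 1)) by ring. reflexivity. Qed.

Definition FF (c N : nat) : R :=
  / 2 * (harmonic (N - c) - harmonic c + harmonic (c - N - 1)) + / 2 * (harmonic (N + c + 1) - harmonic c)
  - 2 * OO N + (if Nat.leb c N then 3 / (2 * X c) else 0).

Lemma OO_S N : OO (S N) = OO N + / X (S N).
Proof. unfold OO. rewrite sumR. reflexivity. Qed.

Lemma Psum_eq c N : @eq R (sum_n (uu c) N) (FF c N).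
Proof.
  induction N.
  - rewrite sum0. unfold FF, uu. unfold OO. rewrite sum0.
    destruct c.
    + simpl. rewrite harm1, harm0. unfold X. simpl. field.
    + replace (Nat.eqb 0 (S c)) with false by reflexivity.
      replace (Nat.leb (S c) 0) with false by reflexivity.
      replace (0 - S c)%nat with 0%nat by lia. replace (S c - 0 - 1)%nat with c by lia.
      replace (0 + S c + 1)%nat with (S (S c)) by lia.
      rewrite Acore_val. rewrite !harmS, harm0. rewrite !S_INR. unfold X. simpl.
      pose proof (pos_INR c). field. lra.
  - rewrite sumR, IHN. unfold FF. rewrite OO_S.
    destruct (lt_eq_lt_dec (S N) c) as [[Hlt|Heq]|Hgt].
    + set (j := (c - S N - 1)%nat). assert (Hc : c = (S N + S j)%nat) by (unfold j; lia).
      clearbody j. subst c. unfold uu.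
      replace (Nat.eqb (S N) (S N + S j)) with false by (symmetry; apply Nat.eqb_neq; lia).
      replace (Nat.leb (S N + S j) N) with false by (symmetry; apply Nat.leb_gt; lia).
      replace (Nat.leb (S N + S j) (S N)) with false by (symmetry; apply Nat.leb_gt; lia).
      replace (N - (S N + S j))%nat with 0%nat by lia.
      replace (S N - (S N + S j))%nat with 0%nat by lia.
      replace (S N + S j - N - 1)%nat with (S j) by lia.
      replace (S N + S j - S N - 1)%nat with j by lia.
      replace (S N + (S N + S j) + 1)%nat with (S (N + (S N + S j) + 1)) by lia.
      rewrite Acore_val. rewrite (harmS j), (harmS (N + (S N + S j) + 1)).
      rewrite !X_eq. rewrite !S_INR, !plus_INR, !S_INR.
      pose proof (pos_INR N). pose proof (pos_INR j). rewrite harm0. simpl INR. set (h1 := harmonic (S N + S j)). set (h2 := harmonic j). set (h3:= harmonic (N + (S N + S j) + 1)). set (o := OO N). set (n := INR N) in *. set (jj := INR j) in *. field. repeat split; lra.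
    + subst c. unfold uu. rewrite Nat.eqb_refl.
      replace (Nat.leb (S N) N) with false by (symmetry; apply Nat.leb_gt; lia).
      replace (Nat.leb (S N) (S N)) with true by (symmetry; apply Nat.leb_le; lia).
      replace (N - S N)%nat with 0%nat by lia. replace (S N - S N)%nat with 0%nat by lia.
      replace (S N - N - 1)%nat with 0%nat by lia. replace (S N - S N - 1)%nat with 0%nat by lia.
      replace (S N + S N + 1)%nat with (S (N + S N + 1)) by lia.
      rewrite (harmS (N + S N + 1)).
      rewrite !X_eq. rewrite !S_INR, !plus_INR, !S_INR.
      pose proof (pos_INR N). rewrite ?harm0. simpl INR. set (o := OO N). set (n := INR N) in *.
      set (h1 := harmonic (S N)). set (h3 := harmonic (N + S N + 1)). replace (0 - 1)%nat with 0%nat by lia. rewrite harm0. field. lra.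
    + unfold uu.
      replace (Nat.eqb (S N) c) with false by (symmetry; apply Nat.eqb_neq; lia).
      replace (Nat.leb c N) with true by (symmetry; apply Nat.leb_le; lia).
      replace (Nat.leb c (S N)) with true by (symmetry; apply Nat.leb_le; lia).
      replace (S N - c)%nat with (S (N - c)) by lia.
      replace (c - N - 1)%nat with 0%nat by lia. replace (c - S N - 1)%nat with 0%nat by lia.
      replace (S N + c + 1)%nat with (S (N + c + 1)) by lia.
      rewrite Acore_val. rewrite (harmS (N - c)), (harmS (N + c + 1)).
      assert (E : INR (S (N - c)) = INR (S N) - INR c) by (rewrite <- minus_INR by lia; f_equal; lia).
      rewrite E.
      rewrite !X_eq. rewrite !S_INR, !plus_INR, !S_INR.
      assert (INR c <= INR N) by (apply le_INR; lia).
      pose proof (pos_INR N). pose proof (pos_INR c). rewrite ?harm0. simpl INR.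
      set (o := OO N). set (n := INR N) in *. set (cc := INR c) in *.
      set (h1 := harmonic c). set (h2 := harmonic (N - c)). set (h3 := harmonic (N + c + 1)).
      field. repeat split; lra.
Qed.

Lemma G_ser c : is_series (uu c) (Gv c).
Proof.
  apply (proj1 (ser_lim _ _)). apply (proj2 (is_lim_seq_incr_n _ c _)).
  apply lim_by_bound with (K := (2 * INR c + 1) / 2 + (INR c + 1) + 2 * (2 * INR c + 2) + 4).
  intro k. rewrite Psum_eq. unfold FF, Gv.
  replace (k + c - c)%nat with k by lia. replace (c - (k + c) - 1)%nat with 0%nat by lia.
  replace (Nat.leb c (k + c)) with true by (symmetry; apply Nat.leb_le; lia).
  rewrite OO_eq, harm0.
  replace (k + c + c + 1)%nat with (k + (2 * c + 1))%nat by lia.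
  replace (2 * (k + c) + 2)%nat with (2 * k + (2 * c + 2))%nat by lia.
  replace (k + c + 1)%nat with (k + (c + 1))%nat by lia.
  pose proof (harm_diff k (2 * c + 1)) as D1.
  pose proof (harm_diff k (c + 1)) as D2.
  pose proof (harm_diff (2 * k) (2 * c + 2)) as D3.
  pose proof (harm_2N k) as D4.
  assert (I1: INR (2*c+1) = 2*INR c+1) by (rewrite plus_INR, mult_INR; simpl; ring).
  assert (I2: INR (c+1) = INR c+1) by (rewrite plus_INR; simpl; ring).
  assert (I3: INR (2*c+2) = 2*INR c+2) by (rewrite plus_INR, mult_INR; simpl; ring).
  assert (I4: INR (2*k) = 2*INR k) by (rewrite mult_INR; simpl; ring).
  rewrite I1 in D1. rewrite I2 in D2. rewrite I3, I4 in D3.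
  pose proof (pos_INR k). pose proof (pos_INR c).
  set (t := / (INR k + 1)).
  assert (tp : 0 < t) by (apply Rinv_0_lt_compat; lra).
  assert (E1 : (2 * INR c + 1) / (INR k + 1) = (2 * INR c + 1) * t) by (unfold t; field; lra).
  assert (E2 : (INR c + 1) / (INR k + 1) = (INR c + 1) * t) by (unfold t; field; lra).
  assert (E3 : (2 * INR c + 2) / (2 * INR k + 1) <= (2 * INR c + 2) * t).
  { unfold t. unfold Rdiv. apply Rmult_le_compat_l. lra. apply Rinv_le_contravar; lra. }
  assert (E4 : 2 / (INR k + 1) = 2 * t) by (unfold t; field; lra).
  assert (EK : ((2 * INR c + 1) / 2 + (INR c + 1) + 2 * (2 * INR c + 2) + 4) / (INR k + 1)
     = ((2 * INR c + 1) / 2 + (INR c + 1) + 2 * (2 * INR c + 2) + 4) * t) by (unfold t; field; lra).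
  rewrite EK. rewrite E1 in D1. rewrite E2 in D2. rewrite E4 in D4.
  apply Rabs_le_between' in D4.
  apply Rabs_le. split; nra.
Qed.

Definition ff (x y : R) (m q : nat) : R := / x ^ (2*q+1) * / y ^ (2*m+1-2*q).

Lemma Bkey x y : 0 < x -> 0 < y -> x <> y ->
  Acore y x / y ^ 2 + 2 / y ^ 3 = Acore y x / x ^ 2.
Proof.
  intros. unfold Acore. simpl. field. repeat split; try lra.
Qed.

Lemma alg_id (x y : R) (m : nat) : 0 < x -> 0 < y -> x <> y -> (1 <= m)%nat ->
  2 * sum_n_m (ff x y m) 1 (m-1) = / y ^ (2*m+1) * Acore x y + / x ^ (2*m+1) * Acore y x.
Proof.
  intros Hx Hy Hxy Hm. destruct m as [|m]. lia. clear Hm.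
  induction m.
  - simpl (1 - 1)%nat. rewrite sum_n_m_zero by lia. change (@zero R_AbelianMonoid) with 0.
    unfold Acore. simpl. field. repeat split; lra.
  - replace (S (S m) - 1)%nat with (S m) by lia.
    replace (S m - 1)%nat with m in IHm by lia.
    rewrite sum_n_Sm by lia.
    assert (E : sum_n_m (ff x y (S (S m))) 1 m = @mult R_Ring (/ y ^ 2) (sum_n_m (ff x y (S m)) 1 m)).
    { rewrite <- (@sum_n_m_mult_l R_Ring). apply sum_n_m_ext_loc. intros k Hk.
      change (@eq R (ff x y (S (S m)) k) (/ y ^ 2 * ff x y (S m) k)). unfold ff.
      replace (2 * S (S m) + 1 - 2 * k)%nat with (2 + (2 * S m + 1 - 2 * k))%nat by lia.
      rewrite (pow_add y 2), Rinv_mult. set (A := / x ^ (2*k+1)). set (B := / y ^ (2 * S m + 1 - 2*k)). ring. }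
    rewrite E. change (plus (mult (/ y ^ 2) (sum_n_m (ff x y (S m)) 1 m)) (ff x y (S (S m)) (S m)))
      with (/ y ^ 2 * (sum_n_m (ff x y (S m)) 1 m) + ff x y (S (S m)) (S m)).
    set (T := sum_n_m (ff x y (S m)) 1 m) in *.
    unfold ff. replace (2 * S (S m) + 1 - 2 * S m)%nat with 3%nat by lia.
    replace (2 * S (S m) + 1)%nat with (2 + (2 * S m + 1))%nat by lia.
    rewrite (pow_add x 2), (pow_add y 2), !Rinv_mult.
    set (P := / x ^ (2 * S m + 1)). set (Q := / y ^ (2 * S m + 1)).
    replace (2 * S m + 1)%nat with (2 * S m + 1)%nat in IHm by lia. fold P Q in IHm.
    pose proof (Bkey x y Hx Hy Hxy) as KB.
    assert (0 < y ^ 2) by (apply pow_lt; lra). assert (0 < x ^ 2) by (apply pow_lt; lra).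
    assert (0 < y ^ 3) by (apply pow_lt; lra).
    assert (KB' : / y ^ 2 * Acore y x + 2 * / y ^ 3 = / x ^ 2 * Acore y x).
    { unfold Rdiv in KB. lra. }
    replace (2 * (/ y ^ 2 * T + P * / y ^ 3)) with (/ y ^ 2 * (2 * T) + 2 * P * / y ^ 3) by ring.
    rewrite IHm.
    replace (/ x ^ 2 * P * Acore y x) with (P * (/ x ^ 2 * Acore y x)) by ring.
    rewrite <- KB'. ring.
Qed.

Lemma snm_zero (a : nat -> R) n m : (m < n)%nat -> @eq R (sum_n_m a n m) 0.
Proof. intros; rewrite sum_n_m_zero; auto. Qed.
Lemma snm_Sm (a : nat -> R) n m : (n <= S m)%nat -> @eq R (sum_n_m a n (S m)) (sum_n_m a n m + a (S m)).
Proof. intros; rewrite sum_n_Sm; auto. Qed.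
Lemma snm_nn (a : nat -> R) n : @eq R (sum_n_m a n n) (a n).
Proof. rewrite sum_n_n; auto. Qed.

Lemma ser_zero : is_series (fun _ : nat => 0) 0.
Proof.
  apply (ser_ext (fun _ => 0) _ (sum_n (fun _ => 0) 0)). auto. rewrite sum0; auto.
  apply ser_fin. auto.
Qed.

Lemma ser_sum_nm (f : nat -> nat -> R) (l : nat -> R) n m :
  (forall k, (n <= k <= m)%nat -> is_series (fun i => f k i) (l k)) ->
  is_series (fun i => sum_n_m (fun k => f k i) n m) (sum_n_m l n m).
Proof.
  revert n. induction m; intros n H.
  - destruct n.
    + apply (ser_ext (fun i => f 0%nat i) _ (l 0%nat)). intro i; symmetry; apply (snm_nn (fun k => f k i)).
      symmetry; apply snm_nn. apply H; lia.
    + apply (ser_ext (fun _ => 0) _ 0). intro i; symmetry; apply (snm_zero (fun k => f k i)); lia.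
      symmetry; apply snm_zero; lia. apply ser_zero.
  - destruct (le_lt_dec n (S m)).
    + apply (ser_ext (fun i => sum_n_m (fun k => f k i) n m + f (S m) i) _ (sum_n_m l n m + l (S m))).
      intro i; symmetry; apply (snm_Sm (fun k => f k i)); lia. symmetry; apply snm_Sm; lia.
      apply serP. apply IHm. intros; apply H; lia. apply H; lia.
    + apply (ser_ext (fun _ => 0) _ 0). intro i; symmetry; apply (snm_zero (fun k => f k i)); lia.
      symmetry; apply snm_zero; lia. apply ser_zero.
Qed.

Lemma ser_point (c : nat) (v : R) : is_series (fun a => if Nat.eqb a c then v else 0) v.
Proof.
  assert (E : forall N, @eq R (sum_n (fun a => if Nat.eqb a c then v else 0) N) (if Nat.leb c N then v else 0)).
  { induction N.
    - rewrite sum0. destruct c; simpl; auto.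
    - rewrite sumR, IHN. destruct (Nat.eq_dec c (S N)).
      + subst. rewrite Nat.eqb_refl. replace (Nat.leb (S N) N) with false by (symmetry; apply Nat.leb_gt; lia).
        rewrite Nat.leb_refl. lra.
      + replace (Nat.eqb (S N) c) with false by (symmetry; apply Nat.eqb_neq; lia).
        destruct (le_lt_dec c N).
        * replace (Nat.leb c N) with true by (symmetry; apply Nat.leb_le; lia).
          replace (Nat.leb c (S N)) with true by (symmetry; apply Nat.leb_le; lia). lra.
        * replace (Nat.leb c N) with false by (symmetry; apply Nat.leb_gt; lia).
          replace (Nat.leb c (S N)) with false by (symmetry; apply Nat.leb_gt; lia). lra. }
  apply (ser_ext (fun a => if Nat.eqb a c then v else 0) _ (sum_n (fun a => if Nat.eqb a c then v else 0) c)). auto.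
  rewrite E, Nat.leb_refl; auto.
  apply ser_fin. intros n Hn. replace (Nat.eqb n c) with false by (symmetry; apply Nat.eqb_neq; lia). auto.
Qed.

Lemma Acore_pos x y : 0 < x -> x < y -> 0 <= Acore y x.
Proof.
  intros. unfold Acore.
  replace (/ (y - x) + / (y + x) - 2 / y) with (2 * x * x / (y * (y - x) * (y + x))) by (field; repeat split; lra).
  apply Rlt_le, Rdiv_lt_0_compat. nra. apply Rmult_lt_0_compat. nra. lra.
Qed.

Lemma Acore_neg x y : 0 < y -> y < x -> Acore y x <= 0.
Proof.
  intros. unfold Acore.
  assert (/ (y - x) < 0) by (apply Rinv_lt_0_compat; lra).
  assert (/ (y + x) <= / y) by (apply Rinv_le_contravar; lra).
  assert (0 < / y) by (apply Rinv_0_lt_compat; lra).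
  unfold Rdiv. lra.
Qed.

Lemma fp_bound (x y : R) (s : nat) : 1 <= x -> x + 2 <= y -> (3 <= s)%nat ->
  / x ^ s * Acore y x <= 4 / y ^ 3.
Proof.
  intros Hx Hy Hs.
  assert (A0 : 0 <= Acore y x) by (apply Acore_pos; lra).
  apply Rle_trans with (/ x ^ 3 * Acore y x).
  { apply Rmult_le_compat_r; auto. apply powinv_le; auto. }
  unfold Acore.
  replace (/ x ^ 3 * (/ (y - x) + / (y + x) - 2 / y)) with (/ (x * y * (y - x) * (y + x) / 2))
    by (simpl; field; repeat split; lra).
  replace (4 / y ^ 3) with (/ (y ^ 3 / 4)) by (simpl; field; lra).
  apply Rinv_le_contravar. simpl. nra.
  assert (H1 : y * y <= 2 * x * (y - x) * (y + x)).
  { assert (y <= 2 * x * (y - x)) by nra. assert (0 <= y) by lra. nra. }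
  simpl. nra.
Qed.

Lemma snm_shift (g : nat -> R) a b d : @eq R (sum_n_m g (a + d) (b + d)) (sum_n_m (fun q => g (q + d)%nat) a b).
Proof.
  revert g. induction d; intro g.
  - rewrite !Nat.add_0_r. apply sum_n_m_ext. intro; rewrite Nat.add_0_r; auto.
  - replace (a + S d)%nat with (S (a + d)) by lia. replace (b + S d)%nat with (S (b + d)) by lia.
    rewrite <- sum_n_m_S. rewrite (IHd (fun n => g (S n))). apply sum_n_m_ext. intro q.
    f_equal. lia.
Qed.

Lemma snm_rev (g : nat -> R) n : @eq R (sum_n_m g 1 n) (sum_n_m (fun q => g (S n - q)%nat) 1 n).
Proof.
  revert g. induction n; intro g.
  - rewrite !snm_zero by lia. auto.
  - rewrite (sum_n_m_Chasles g 1 1 (S n)) by lia.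
    change (plus (sum_n_m g 1 1) (sum_n_m g 2 (S n))) with (sum_n_m g 1 1 + sum_n_m g 2 (S n)).
    rewrite snm_nn. rewrite <- sum_n_m_S. rewrite (IHn (fun q => g (S q))).
    rewrite snm_Sm by lia. replace (S (S n) - S n)%nat with 1%nat by lia.
    rewrite Rplus_comm. f_equal. apply sum_n_m_ext_loc. intros k Hk. f_equal. lia.
Qed.

Lemma refl_double (F : nat -> R) n : (forall q, (1 <= q <= n)%nat -> F (2*n+1-q)%nat = F q) ->
  @eq R (sum_n_m F 1 (2*n)) (2 * sum_n_m F 1 n).
Proof.
  intros H. rewrite (sum_n_m_Chasles F 1 n (2*n)) by lia.
  change (plus (sum_n_m F 1 n) (sum_n_m F (S n) (2 * n))) with (sum_n_m F 1 n + sum_n_m F (S n) (2 * n)).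
  replace (S n) with (1 + n)%nat by lia. replace (2 * n)%nat with (n + n)%nat by lia.
  rewrite snm_shift. rewrite (snm_rev (fun q => F (q+n)%nat)).
  assert (E : @eq R (sum_n_m (fun q => F (S n - q + n)%nat) 1 n) (sum_n_m F 1 n)).
  { apply sum_n_m_ext_loc. intros k Hk. rewrite <- (H k) by lia. f_equal. lia. }
  rewrite E. ring.
Qed.

Definition Kf b a c := sum_n_m (fun q => / X a ^ (2*q+1) * / X c ^ (4*b-2*q-1)) 1 (2*b-2).
Definition Qc b c := sum_n_m (fun q => dlambda (2*q+1) * / X c ^ (4*b-2*q-1)) 1 (2*b-2).
Definition Pf b := sum_n_m (fun q => dlambda (2*q+1) * dlambda (4*b-2*q-1)) 1 (2*b-2).
Definition BB s a c := / X a ^ s * uu a c.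

Lemma K_ser b c : is_series (fun a => Kf b a c) (Qc b c).
Proof.
  unfold Kf, Qc.
  apply (ser_sum_nm (fun q a => / X a ^ (2*q+1) * / X c ^ (4*b-2*q-1))).
  intros k Hk. apply is_series_scal_r. apply lam_ser. lia.
Qed.

Lemma Q_ser b : (1 <= b)%nat -> is_series (Qc b) (Pf b).
Proof.
  intros hb. unfold Qc, Pf.
  apply (ser_sum_nm (fun q c => dlambda (2*q+1) * / X c ^ (4*b-2*q-1))).
  intros k Hk. apply serS. apply lam_ser. lia.
Qed.

Lemma K_diag b c : (1 <= b)%nat -> Kf b c c = INR (2*b-2) * / X c ^ (4*b).
Proof.
  intros hb. unfold Kf.
  rewrite (sum_n_m_ext_loc _ (fun _ => / X c ^ (4*b)) 1 (2*b-2)).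
  rewrite sum_n_m_const. f_equal. f_equal. lia.
  intros k Hk. rewrite <- Rinv_mult, <- pow_add. f_equal. f_equal. lia.
Qed.

Lemma X_inj a c : a <> c -> X a <> X c.
Proof. intros H E. rewrite !X_eq in E. apply H. apply INR_eq. lra. Qed.

Lemma decomp b a c : (1 <= b)%nat ->
  2 * Kf b a c = / X c ^ (4*b-1) * uu c a + BB (4*b-1) a c + (if Nat.eqb a c then 2 * Kf b c c else 0).
Proof.
  intros hb. unfold BB, uu. destruct (Nat.eq_dec a c).
  - subst. rewrite Nat.eqb_refl. ring.
  - replace (Nat.eqb a c) with false by (symmetry; apply Nat.eqb_neq; auto).
    replace (Nat.eqb c a) with false by (symmetry; apply Nat.eqb_neq; auto).
    pose proof (alg_id (X a) (X c) (2*b-1) (X_pos a) (X_pos c) (X_inj a c n)) as H.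
    replace (2 * (2 * b - 1) + 1)%nat with (4*b-1)%nat in H by lia.
    replace (2 * b - 1 - 1)%nat with (2*b-2)%nat in H by lia.
    assert (E : Kf b a c = sum_n_m (ff (X a) (X c) (2 * b - 1)) 1 (2 * b - 2)).
    { unfold Kf. apply sum_n_m_ext_loc. intros k Hk. unfold ff. f_equal. f_equal. f_equal. lia. }
    rewrite E, H; [ring | lia].
Qed.

Lemma half_eq b : (1 <= b)%nat -> Pf b = 2 * sum_n_m (fun q : nat => dlambda (2 * q + 1) * dlambda (4 * b - 2 * q - 1)) 1 (b - 1).
Proof.
  intros hb. unfold Pf. replace (2 * b - 2)%nat with (2 * (b - 1))%nat by lia.
  apply refl_double. intros q Hq. rewrite Rmult_comm. f_equal; f_equal; lia.
Qed.

Theorem main_proof (b : nat) (hb : (1 <= b)%nat) :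
  is_series (fun n : nat => harmonic n / (INR (2 * n + 1)) ^ (4 * b - 1))
    (- 2 * dlambda (4 * b - 1) * ln 2
     + (2 * INR b - 1 / 2) * dlambda (4 * b)
     - 2 * sum_n_m (fun q : nat => dlambda (2 * q + 1) * dlambda (4 * b - 2 * q - 1)) 1 (b - 1)).
Proof.
  assert (Hs3 : (3 <= 4*b-1)%nat) by lia.
  set (s := (4*b-1)%nat) in *.
  assert (Hs4 : (4*b = S s)%nat) by (unfold s; lia).
  assert (exH : ex_series (fun c => harmonic c / X c ^ s)).
  { apply (@ex_series_le R_AbsRing R_CompleteNormedModule _ (fun c => / X c ^ (s - 1))).
    2: apply lam_ex; lia.
    intro n. change (norm (harmonic n / X n ^ s)) with (Rabs (harmonic n / X n ^ s)).
    pose proof (X_pos n). pose proof (harm_nonneg n). pose proof (harm_le n).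
    assert (0 < X n ^ (s - 1)) by (apply pow_lt; lra).
    replace (X n ^ s) with (X n * X n ^ (s - 1)) by (replace (X n ^ s) with (X n ^ S (s-1)) by (f_equal; lia); reflexivity).
    rewrite Rabs_pos_eq.
    2: { apply Rmult_le_pos; auto. apply Rlt_le, Rinv_0_lt_compat. nra. }
    rewrite X_eq in *. pose proof (pos_INR n).
    replace (/ (2 * INR n + 1) ^ (s - 1)) with ((2 * INR n + 1) / ((2 * INR n + 1) * (2 * INR n + 1) ^ (s - 1))) by (field; lra).
    unfold Rdiv. apply Rmult_le_compat_r. apply Rlt_le, Rinv_0_lt_compat. nra. lra. }
  set (SH := Series (fun c => harmonic c / X c ^ s)).
  assert (HSH : is_series (fun c => harmonic c / X c ^ s) SH) by (apply Series_correct; auto).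
  assert (HG : is_series (fun c => / X c ^ s * Gv c) (-2 * ln 2 * dlambda s - SH + 3/2 * dlambda (4*b))).
  { apply (ser_ext (fun c => -2 * ln 2 * / X c ^ s - harmonic c / X c ^ s + 3/2 * / X c ^ (4*b)) _ (-2 * ln 2 * dlambda s - SH + 3/2 * dlambda (4*b))).
    2: reflexivity.
    - intro c. unfold Gv. rewrite Hs4. simpl pow. pose proof (X_pos c).
      assert (0 < X c ^ s) by (apply pow_lt; lra). field. lra.
    - apply serP. apply serM. apply serS. apply lam_ser; lia. auto. apply serS. apply lam_ser; lia. }
  set (LG := -2 * ln 2 * dlambda s - SH + 3/2 * dlambda (4*b)) in *.
  set (W := fun c => 2 * Qc b c - / X c ^ s * Gv c - 2 * Kf b c c).
  assert (HWa : forall c, is_series (fun a => BB s a c) (W c)).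
  { intro c. apply (ser_ext (fun a => 2 * Kf b a c - / X c ^ s * uu c a - (if Nat.eqb a c then 2 * Kf b c c else 0)) _ (W c)).
    2: reflexivity.
    - intro a. pose proof (decomp b a c hb). fold s in H. lra.
    - apply serM. apply serM. apply serS. apply K_ser. apply serS. apply G_ser. apply ser_point. }
  assert (HKd : is_series (fun c => Kf b c c) (INR (2*b-2) * dlambda (4*b))).
  { apply (ser_ext (fun c => INR (2*b-2) * / X c ^ (4*b)) _ (INR (2*b-2) * dlambda (4*b))). intro c; symmetry; apply K_diag; auto.
    reflexivity. apply serS. apply lam_ser; lia. }
  set (LW := 2 * Pf b - LG - 2 * (INR (2*b-2) * dlambda (4*b))).
  assert (HWs : is_series W LW).
  { apply serM. apply serM. apply serS. apply Q_ser; auto. auto. apply serS. auto. }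
  set (fp := fun a c => if Nat.ltb a c then BB s a c else 0).
  set (fm := fun a c => if Nat.ltb c a then - BB s a c else 0).
  assert (Hsplit : forall a c, BB s a c = fp a c - fm a c).
  { intros a c. unfold fp, fm. destruct (lt_eq_lt_dec a c) as [[H|H]|H].
    - replace (Nat.ltb a c) with true by (symmetry; apply Nat.ltb_lt; auto).
      replace (Nat.ltb c a) with false by (symmetry; apply Nat.ltb_ge; lia). ring.
    - subst. rewrite Nat.ltb_irrefl. unfold BB, uu. rewrite Nat.eqb_refl. ring.
    - replace (Nat.ltb a c) with false by (symmetry; apply Nat.ltb_ge; lia).
      replace (Nat.ltb c a) with true by (symmetry; apply Nat.ltb_lt; auto). ring. }
  assert (Xlt : forall a c, (a < c)%nat -> X a + 2 <= X c).
  { intros a c H. rewrite !X_eq. assert (H0 : INR (S a) <= INR c) by (apply le_INR; lia). rewrite S_INR in H0. lra. }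
  assert (fp_nn : forall a c, 0 <= fp a c).
  { intros a c. unfold fp. destruct (Nat.ltb a c) eqn:E. 2: lra.
    apply Nat.ltb_lt in E. unfold BB, uu.
    replace (Nat.eqb c a) with false by (symmetry; apply Nat.eqb_neq; lia).
    apply Rmult_le_pos. apply Rlt_le, Rinv_0_lt_compat, pow_lt, X_pos.
    apply Acore_pos. apply X_pos. specialize (Xlt a c E). lra. }
  assert (fm_nn : forall a c, 0 <= fm a c).
  { intros a c. unfold fm. destruct (Nat.ltb c a) eqn:E. 2: lra.
    apply Nat.ltb_lt in E. unfold BB, uu.
    replace (Nat.eqb c a) with false by (symmetry; apply Nat.eqb_neq; lia).
    assert (0 < / X a ^ s) by (apply Rinv_0_lt_compat, pow_lt, X_pos).
    assert (Acore (X c) (X a) <= 0). { apply Acore_neg. apply X_pos. specialize (Xlt c a E). lra. }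
    nra. }
  set (Wp := fun c => sum_n (fun a => fp a c) c).
  assert (HWp : forall c, is_series (fun a => fp a c) (Wp c)).
  { intro c. apply ser_fin. intros n Hn. unfold fp. replace (Nat.ltb n c) with false by (symmetry; apply Nat.ltb_ge; lia). auto. }
  assert (Wp_bd : forall c, Wp c <= 4 * / X c ^ 2).
  { intro c. unfold Wp. pose proof (X_pos c) as Xp.
    apply Rle_trans with (sum_n (fun _ => 4 / X c ^ 3) c).
    - apply sum_n_m_le. intro a. unfold fp. destruct (Nat.ltb a c) eqn:E.
      + apply Nat.ltb_lt in E. unfold BB, uu.
        replace (Nat.eqb c a) with false by (symmetry; apply Nat.eqb_neq; lia).
        apply fp_bound. apply X_ge1. apply Xlt; auto. auto.
      + assert (0 < X c ^ 3) by (apply pow_lt; lra). unfold Rdiv.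
        assert (0 < / X c ^ 3) by (apply Rinv_0_lt_compat; lra). lra.
    - unfold sum_n. rewrite sum_n_m_const. replace (S c - 0)%nat with (S c) by lia.
      rewrite S_INR. pose proof (X_eq c). pose proof (pos_INR c).
      replace (4 / X c ^ 3) with (4 * / X c ^ 2 * / X c) by (simpl; field; lra).
      assert (0 < / X c ^ 2) by (apply Rinv_0_lt_compat, pow_lt; lra).
      assert (E1 : (INR c + 1) * / X c <= 1).
      { replace 1 with (X c * / X c) at 2 by (field; lra). apply Rmult_le_compat_r.
        apply Rlt_le, Rinv_0_lt_compat; lra. lra. }
      nra. }
  assert (exWp : ex_series Wp).
  { apply (@ex_series_le R_AbsRing R_CompleteNormedModule _ (fun c => 4 * / X c ^ 2)).
    - intro c. change (norm (Wp c)) with (Rabs (Wp c)). rewrite Rabs_pos_eq. apply Wp_bd.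
      apply sum_nonneg. intro; apply fp_nn.
    - exists (4 * dlambda 2). apply serS. apply lam_ser; lia. }
  destruct exWp as [Lp HLp].
  destruct (fubini fp Wp Lp fp_nn HWp HLp) as [rp [Hrp HLp']].
  assert (HWm : forall c, is_series (fun a => fm a c) (Wp c - W c)).
  { intro c. apply (ser_ext (fun a => fp a c - BB s a c) _ (Wp c - W c)). intro a. rewrite (Hsplit a c). ring. reflexivity.
    apply serM; auto. }
  assert (HWms : is_series (fun c => Wp c - W c) (Lp - LW)) by (apply serM; auto).
  destruct (fubini fm (fun c => Wp c - W c) (Lp - LW) fm_nn HWm HWms) as [rm [Hrm HLm]].
  assert (Hrow : forall a, / X a ^ s * Gv a = rp a - rm a).
  { intro a.
    assert (H1 : is_series (fun c => BB s a c) (/ X a ^ s * Gv a)) by (apply serS; apply G_ser).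
    assert (H2 : is_series (fun c => BB s a c) (rp a - rm a)).
    { apply (ser_ext (fun c => fp a c - fm a c) _ (rp a - rm a)). intro c; rewrite Hsplit; auto. reflexivity.
      apply serM; auto. }
    apply is_series_unique in H1. apply is_series_unique in H2. congruence. }
  assert (HG2 : is_series (fun a => / X a ^ s * Gv a) LW).
  { apply (ser_ext (fun a => rp a - rm a) _ (Lp - (Lp - LW))). intro a; rewrite Hrow; auto. ring.
    apply serM; auto. }
  assert (EGW : LG = LW).
  { apply is_series_unique in HG. apply is_series_unique in HG2. congruence. }
  apply (ser_ext (fun c => harmonic c / X c ^ s) _ SH). intro; reflexivity.
  2: exact HSH.
  rewrite <- (half_eq b hb).
  assert (EI : INR (2 * b - 2) = 2 * INR b - 2).
  { rewrite minus_INR by lia. rewrite mult_INR. simpl. ring. }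
  unfold LW, LG in EGW. rewrite EI in EGW.
  set (l1 := dlambda s) in *. set (l2 := dlambda (4*b)) in *. set (P := Pf b) in *.
  set (L2 := ln 2) in *. set (B := INR b) in *.
  nra.
Qed.

Theorem mainTheorem4 (b : nat) (hb : (1 <= b)%nat) :
  is_series (fun n : nat => harmonic n / (INR (2 * n + 1)) ^ (4 * b - 1))
    (- 2 * dlambda (4 * b - 1) * ln 2
     + (2 * INR b - 1 / 2) * dlambda (4 * b)
     - 2 * sum_n_m (fun q : nat => dlambda (2 * q + 1) * dlambda (4 * b - 2 * q - 1)) 1 (b - 1)).
Proof. exact (main_proof b hb). Qed.
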